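(* Let $a\ge0$, $N\ge2$, and let $X_t$ be the continuous-time Markov chain on $\{0,1,\dots,N\}$ with transitions $j\to j+1$ at rate $a\,j(j-1)(N-j)/(N(N-1))$ and $j\to j-1$ at rate $j$, started from $X_0=N$. For $j=1,\dots,N$ let $\tau_j=\int_0^\infty P(X_t=j\mid X_0=N)\,dt$. Then $$\sum_{j=1}^N j\,\tau_j\le\sum_{j=1}^N\sum_{i=0}^j(a/4)^i.$$
   Context: The chain $X_t$ is the number of individuals in a single patch of the $N$-patch model when the outer birth rate is $b=0$. *)

(* Defs.v *)
From Stdlib Require Import Reals Lra.
Open Scope R_scope.

Definition up_rate (a : R) (N j : nat) : R :=
  a * INR j * (INR j - 1) * (INR N - INR j) / (INR N * (INR N - 1)).

Definition down_rate (j : nat) : R := INR j.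

(* Right-hand side of the Kolmogorov forward equation for state j in {0..N},
   given the distribution q : nat -> R at some time. *)
Definition fwd_rhs (a : R) (N : nat) (q : nat -> R) (j : nat) : R :=
  (match j with O => 0 | S k => up_rate a N k * q k end)
  + (if (j <? N)%nat then down_rate (S j) * q (S j) else 0)
  - (up_rate a N j + down_rate j) * q j.

(* p t j = P(X_t = j | X_0 = N): the (unique) solution of the forward
   Kolmogorov equations with initial distribution concentrated at N. *)
Definition is_transition_from_N (a : R) (N : nat) (p : R -> nat -> R) : Prop :=
  (forall j, (j <= N)%nat -> p 0 j = if Nat.eqb j N then 1 else 0) /\
  (forall j t, (j <= N)%nat ->
     derivable_pt_lim (fun s => p s j) t (fwd_rhs a N (p t) j)).

(* Main.v *)
Require Import Defs.
From Stdlib Require Import Reals Lra Lia Psatz ZArith.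
From Coquelicot Require Import Coquelicot.
Open Scope R_scope.

Lemma nat_above (T : R) : exists n : nat, T <= INR n.
Proof.
  destruct (archimed (Rabs T)) as [H1 _].
  exists (Z.abs_nat (up (Rabs T))).
  rewrite INR_IZR_INZ, Zabs2Nat.id_abs, abs_IZR.
  pose proof (Rle_abs T). pose proof (Rle_abs (IZR (up (Rabs T)))). lra.
Qed.

Lemma sum_deriv (F : nat -> R -> R) (dF : nat -> R) (t : R) (n : nat) :
  (forall k, (k <= n)%nat -> derivable_pt_lim (F k) t (dF k)) ->
  derivable_pt_lim (fun s => sum_f_R0 (fun k => F k s) n) t (sum_f_R0 dF n).
Proof.
  induction n as [|n IH]; intros H; simpl.
  - apply H; lia.
  - apply (derivable_pt_lim_plus (fun s => sum_f_R0 (fun k => F k s) n) (F (S n))).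
    + apply IH; intros; apply H; lia.
    + apply H; lia.
Qed.

Lemma sum_nonneg (f : nat -> R) (n : nat) :
  (forall k, (k <= n)%nat -> 0 <= f k) -> 0 <= sum_f_R0 f n.
Proof.
  induction n as [|n IH]; intros H; simpl.
  - apply H; lia.
  - pose proof (H (S n) (le_n _)). assert (0 <= sum_f_R0 f n) by (apply IH; intros; apply H; lia). lra.
Qed.

Lemma term_le_sum (f : nat -> R) (n k : nat) :
  (forall k, (k <= n)%nat -> 0 <= f k) -> (k <= n)%nat -> f k <= sum_f_R0 f n.
Proof.
  induction n as [|n IH]; intros H Hk; simpl.
  - replace k with 0%nat by lia. lra.
  - destruct (Nat.eq_dec k (S n)) as [->|Hne].
    + assert (0 <= sum_f_R0 f n) by (apply sum_nonneg; intros; apply H; lia). lra.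
    + assert (f k <= sum_f_R0 f n) by (apply IH; [intros; apply H; lia | lia]).
      pose proof (H (S n) (le_n _)). lra.
Qed.

Definition mneg (x : R) : R := Rmin x 0.
Definition gsq (x : R) : R := mneg x * mneg x.

Lemma mneg_props (x : R) : mneg x <= 0 /\ mneg x <= x /\ mneg x * x = mneg x * mneg x.
Proof. unfold mneg, Rmin; destruct (Rle_dec x 0); nra. Qed.

Lemma gsq_taylor (x h : R) : Rabs (gsq (x + h) - gsq x - 2 * mneg x * h) <= h * h.
Proof.
  apply Rabs_le. unfold gsq, mneg, Rmin.
  destruct (Rle_dec (x + h) 0); destruct (Rle_dec x 0); split; nra.
Qed.

Lemma gsq_deriv (x : R) : derivable_pt_lim gsq x (2 * mneg x).
Proof.
  intros eps Heps. exists (mkposreal eps Heps). intros h Hh Hlt. simpl in Hlt.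
  pose proof (gsq_taylor x h) as T.
  replace ((gsq (x + h) - gsq x) / h - 2 * mneg x) with
    ((gsq (x + h) - gsq x - 2 * mneg x * h) / h) by (field; auto).
  rewrite Rabs_div by auto.
  apply (Rmult_lt_reg_r (Rabs h)). apply Rabs_pos_lt; auto.
  unfold Rdiv. rewrite Rmult_assoc, Rinv_l by (apply Rabs_no_R0; auto).
  rewrite Rmult_1_r.
  apply Rle_lt_trans with (h * h); auto.
  replace (h * h) with (Rabs h * Rabs h).
  - apply Rmult_lt_compat_r; auto. apply Rabs_pos_lt; auto.
  - rewrite <- Rabs_mult. apply Rabs_right. nra.
Qed.

Lemma up_rate_nonneg (a : R) (N j : nat) : 0 <= a -> (2 <= N)%nat -> (j <= N)%nat ->
  0 <= up_rate a N j.
Proof.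
  intros Ha HN Hj. unfold up_rate.
  assert (HN2 : 2 <= INR N) by (apply (le_INR 2); lia).
  assert (HjN : INR j <= INR N) by (apply le_INR; lia).
  assert (0 <= INR j) by apply pos_INR.
  apply Rmult_le_pos.
  - destruct j as [|j].
    + simpl. lra.
    + assert (1 <= INR (S j)) by (apply (le_INR 1); lia).
      apply Rmult_le_pos; [apply Rmult_le_pos; [apply Rmult_le_pos|]|]; lra.
  - apply Rlt_le, Rinv_0_lt_compat. nra.
Qed.

Lemma up_rate_le_aN (a : R) (N j : nat) : 0 <= a -> (2 <= N)%nat -> (j <= N)%nat ->
  up_rate a N j <= a * INR N.
Proof.
  intros Ha HN Hj. unfold up_rate.
  assert (HN2 : 2 <= INR N) by (apply (le_INR 2); lia).
  assert (HjN : INR j <= INR N) by (apply le_INR; lia).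
  assert (0 <= INR j) by apply pos_INR.
  assert (Hd : 0 < INR N * (INR N - 1)) by nra.
  unfold Rdiv. apply (Rmult_le_reg_r (INR N * (INR N - 1))); auto.
  rewrite Rmult_assoc, Rinv_l by lra. rewrite Rmult_1_r.
  destruct j as [|j].
  - simpl. replace (a * 0 * (0 - 1) * (INR N - 0)) with 0 by ring. apply Rmult_le_pos; [apply Rmult_le_pos|]; lra.
  - assert (1 <= INR (S j)) by (apply (le_INR 1); lia).
    set (J := INR (S j)) in *. set (n := INR N) in *.
    assert (J * (J - 1) * (n - J) <= n * (n * (n - 1))).
    { assert (J * (J-1) <= n * (n-1)) by nra.
      assert (0 <= J * (J-1)) by nra.
      assert (n - J <= n) by lra. nra. }
    nra.
Qed.


Lemma nb_lemma (mj mk pk c Cb F : R) : mj <= 0 -> mk <= pk -> 0 <= c -> c <= Cb ->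
  mj * mj <= F -> mk * mk <= F -> 2 * mj * (c * pk) <= 2 * Cb * F.
Proof.
  intros H1 H2 H3 H4 H5 H6.
  assert (E1 : 2 * mj * (c * pk) <= 2 * mj * (c * mk)).
  { assert (0 <= (- mj * c) * (pk - mk)) by (apply Rmult_le_pos; nra). nra. }
  assert (E2 : 2 * mj * mk <= mj * mj + mk * mk) by (pose proof (Rle_0_sqr (mj - mk)); unfold Rsqr in *; nra).
  assert (0 <= F) by nra.
  assert (E3 : 2 * mj * (c * mk) <= c * (2 * F)) by nra.
  nra.
Qed.

Lemma gsq_nonneg (x : R) : 0 <= gsq x.
Proof. unfold gsq. nra. Qed.

Lemma gsq_zero (x : R) : 0 <= x -> gsq x = 0.
Proof. intros. unfold gsq, mneg, Rmin. destruct (Rle_dec x 0); nra. Qed.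

Lemma gsq_le0 (x : R) : gsq x <= 0 -> 0 <= x.
Proof. unfold gsq, mneg, Rmin. destruct (Rle_dec x 0); nra. Qed.

Lemma positivity (a : R) (N : nat) (p : R -> nat -> R) :
  0 <= a -> (2 <= N)%nat -> is_transition_from_N a N p ->
  forall T j, 0 <= T -> (j <= N)%nat -> 0 <= p T j.
Proof.
  intros Ha HN [H0 HD].
  set (U := a * INR N). set (D := INR N).
  set (C := 2 * (U + D) * INR (S N)).
  set (f := fun t => sum_f_R0 (fun j => gsq (p t j)) N).
  set (f' := fun t => sum_f_R0 (fun j => 2 * mneg (p t j) * fwd_rhs a N (p t) j) N).
  assert (Hf : forall t, derivable_pt_lim f t (f' t)).
  { intros t. unfold f, f'.
    apply (sum_deriv (fun j s => gsq (p s j))). intros k Hk.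
    apply (derivable_pt_lim_comp (fun s => p s k) gsq). apply HD; auto. apply gsq_deriv. }
  assert (HUD : 0 <= U /\ 0 <= D).
  { unfold U, D. split. apply Rmult_le_pos; auto; apply pos_INR. apply pos_INR. }
  assert (Hb : forall t, f' t <= C * f t).
  { intros t. unfold f', C.
    assert (Hmf : forall k, (k <= N)%nat -> mneg (p t k) * mneg (p t k) <= f t).
    { intros k Hk. unfold f. apply (term_le_sum (fun j => gsq (p t j))); auto.
      intros; apply gsq_nonneg. }
    apply Rle_trans with (sum_f_R0 (fun _ => 2 * U * f t + 2 * D * f t) N).
    - apply sum_Rle. intros j Hj. unfold fwd_rhs.
      destruct (mneg_props (p t j)) as [M1 [M2 M3]].
      assert (A1 : 2 * mneg (p t j) * (match j with O => 0 | S k => up_rate a N k * p t k end)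
                   <= 2 * U * f t).
      { destruct j as [|k].
        - assert (Hz : (0 <= N)%nat) by lia. pose proof (Hmf 0%nat Hz) as Hz2. assert (0 <= f t) by nra. nra.
        - destruct (mneg_props (p t k)) as [K1 [K2 K3]].
          apply nb_lemma with (mneg (p t k)); auto.
          + apply up_rate_nonneg; auto; lia.
          + apply up_rate_le_aN; auto; lia.
          + apply Hmf; lia. }
      assert (A2 : 2 * mneg (p t j) * (if (j <? N)%nat then down_rate (S j) * p t (S j) else 0)
                   <= 2 * D * f t).
      { destruct (j <? N)%nat eqn:E.
        - apply Nat.ltb_lt in E.
          destruct (mneg_props (p t (S j))) as [K1 [K2 K3]].
          apply nb_lemma with (mneg (p t (S j))); auto;
            try (apply Hmf; lia); unfold down_rate, D; try apply pos_INR; apply le_INR; lia.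
        - assert (Hz : (0 <= N)%nat) by lia. pose proof (Hmf 0%nat Hz) as Hz2. assert (0 <= f t) by nra. nra. }
      assert (A3 : 0 <= up_rate a N j + down_rate j).
      { pose proof (up_rate_nonneg a N j Ha HN Hj). unfold down_rate. pose proof (pos_INR j). lra. }
      set (A := match j with O => 0 | S k => up_rate a N k * p t k end) in *.
      set (B := if (j <? N)%nat then down_rate (S j) * p t (S j) else 0) in *.
      assert (0 <= (up_rate a N j + down_rate j) * (mneg (p t j) * mneg (p t j))) by
        (apply Rmult_le_pos; nra).
      nra.
    - rewrite sum_cte. lra. }
  set (h := fun t => exp (- C * t) * f t).
  set (h' := fun t => (- C * exp (- C * t)) * f t + exp (- C * t) * f' t).
  assert (Hh : forall t, derivable_pt_lim h t (h' t)).
  { intros t. unfold h, h'.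
    apply (derivable_pt_lim_mult (fun t => exp (- C * t)) f).
    - apply is_derive_Reals. auto_derive. auto. ring.
    - apply Hf. }
  assert (Hh0 : h 0 = 0).
  { unfold h, f. replace (- C * 0) with 0 by ring. rewrite exp_0.
    rewrite (sum_eq _ (fun _ => 0)).
    - rewrite sum_cte. ring.
    - intros i Hi. apply gsq_zero. rewrite H0 by auto. destruct (i =? N)%nat; lra. }
  assert (HhT : forall T, 0 <= T -> h T <= 0).
  { intros T HT. destruct (Rle_lt_or_eq_dec 0 T HT) as [HT'|HT'].
    - destruct (MVT_cor2 h h' 0 T HT' (fun c _ => Hh c)) as [c [Ec _]].
      assert (h' c <= 0).
      { unfold h'. pose proof (exp_pos (- C * c)). pose proof (Hb c). nra. }
      nra.
    - subst T. lra. }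
  intros T j HT Hj.
  apply gsq_le0.
  assert (f T <= 0).
  { pose proof (HhT T HT). unfold h in H. pose proof (exp_pos (- C * T)). nra. }
  apply Rle_trans with (f T); auto.
  unfold f. apply (term_le_sum (fun j => gsq (p T j))); auto. intros; apply gsq_nonneg.
Qed.


Definition Lw (a : R) (N : nat) (w : nat -> R) (j : nat) : R :=
  up_rate a N j * (w (S j) - w j) + down_rate j * (w (pred j) - w j).

Lemma sbp_partial (a : R) (N : nat) (w q : nat -> R) (m : nat) : (m < N)%nat ->
  sum_f_R0 (fun j => w j * fwd_rhs a N q j) m =
  sum_f_R0 (fun j => q j * Lw a N w j) m - up_rate a N m * q m * w (S m)
   + w m * down_rate (S m) * q (S m).
Proof.
  induction m as [|m IH]; intros Hm; cbn [sum_f_R0].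
  - unfold fwd_rhs, Lw. assert (E: (0 <? N)%nat = true) by (apply Nat.ltb_lt; lia).
    rewrite E. unfold down_rate; simpl INR. simpl. ring.
  - rewrite IH by lia. unfold fwd_rhs at 1.
    assert (E: (S m <? N)%nat = true) by (apply Nat.ltb_lt; lia). rewrite E.
    unfold Lw. cbn [pred]. ring.
Qed.

Lemma sbp_full (a : R) (M : nat) (w q : nat -> R) :
  sum_f_R0 (fun j => w j * fwd_rhs a (S M) q j) (S M) =
  sum_f_R0 (fun j => q j * Lw a (S M) w j) (S M).
Proof.
  cbn [sum_f_R0]. rewrite sbp_partial by lia.
  unfold fwd_rhs at 1. rewrite Nat.ltb_irrefl.
  unfold Lw. cbn [pred].
  assert (U: up_rate a (S M) (S M) = 0) by (unfold up_rate, Rdiv; ring).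
  rewrite U. ring.
Qed.




Definition Sg (a : R) (m : nat) : R := sum_f_R0 (fun i => (a / 4) ^ i) m.

Fixpoint wgt (a : R) (N : nat) (j : nat) : R :=
  match j with O => 0 | S k => wgt a N k + Sg a (N - k) end.

Lemma Sg_ge1 (a : R) (m : nat) : 0 <= a -> 1 <= Sg a m.
Proof.
  intros Ha. unfold Sg. induction m as [|m IH]; cbn [sum_f_R0].
  - simpl. lra.
  - assert (0 <= (a/4) ^ S m) by (apply pow_le; lra). lra.
Qed.

Lemma Sg_succ (a : R) (m : nat) : Sg a (S m) = 1 + a / 4 * Sg a m.
Proof.
  unfold Sg. induction m as [|m IH].
  - simpl. ring.
  - set (f := fun i => (a / 4) ^ i) in *.
    change (sum_f_R0 f (S (S m))) with (sum_f_R0 f (S m) + f (S (S m))).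
    rewrite IH at 1. change (sum_f_R0 f (S m)) with (sum_f_R0 f m + f (S m)).
    unfold f. simpl. unfold Rdiv. ring.
Qed.

Lemma wgt_nonneg (a : R) (N j : nat) : 0 <= a -> 0 <= wgt a N j.
Proof.
  intros Ha. induction j as [|j IH]; simpl. lra.
  pose proof (Sg_ge1 a (N - j) Ha). lra.
Qed.

Lemma up_le (a : R) (N j : nat) : 0 <= a -> (2 <= N)%nat -> (j <= N)%nat ->
  up_rate a N j <= INR j * (a / 4).
Proof.
  intros Ha HN Hj. unfold up_rate.
  assert (HN2 : 2 <= INR N) by (apply (le_INR 2); lia).
  assert (HjN : INR j <= INR N) by (apply le_INR; lia).
  assert (0 <= INR j) by apply pos_INR.
  assert (Hd : 0 < INR N * (INR N - 1)) by nra.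
  unfold Rdiv at 1. apply (Rmult_le_reg_r (INR N * (INR N - 1))); auto.
  rewrite Rmult_assoc, Rinv_l by lra. rewrite Rmult_1_r.
  set (J := INR j) in *. set (n := INR N) in *.
  assert (K : 4 * ((J - 1) * (n - J)) <= n * (n - 1)) by (pose proof (Rle_0_sqr (2*J-1-n)); unfold Rsqr in *; nra).
  assert (0 <= a * J) by nra.
  nra.
Qed.

Lemma Lw_bound (a : R) (N j : nat) : 0 <= a -> (2 <= N)%nat -> (j <= N)%nat ->
  Lw a N (wgt a N) j + INR j <= 0.
Proof.
  intros Ha HN Hj. unfold Lw, down_rate. destruct j as [|k].
  - unfold up_rate. simpl. unfold Rdiv. nra.
  - cbn [pred]. change (wgt a N (S (S k))) with (wgt a N (S k) + Sg a (N - S k)).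
    change (wgt a N (S k)) with (wgt a N k + Sg a (N - k)).
    replace (N - k)%nat with (S (N - S k)) by lia.
    rewrite Sg_succ.
    pose proof (up_le a N (S k) Ha HN Hj).
    pose proof (Sg_ge1 a (N - S k) Ha).
    nra.
Qed.

Lemma sum_rev (g : nat -> R) (n : nat) :
  sum_f_R0 (fun j => g (n - j)%nat) n = sum_f_R0 g n.
Proof.
  induction n as [|n IH].
  - reflexivity.
  - rewrite decomp_sum by lia. cbn [pred]. rewrite Nat.sub_0_r.
    rewrite (sum_eq _ (fun j => g (n - j)%nat)) by (intros; f_equal; lia).
    rewrite IH. cbn [sum_f_R0]. ring.
Qed.

Lemma wgt_S (a : R) (N j : nat) :
  wgt a N (S j) = sum_f_R0 (fun k => Sg a (N - k)) j.
Proof.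
  induction j as [|j IH].
  - simpl. ring.
  - change (wgt a N (S (S j))) with (wgt a N (S j) + Sg a (N - S j)).
    rewrite IH. reflexivity.
Qed.

Lemma wgt_N (a : R) (M : nat) :
  wgt a (S M) (S M) = sum_f_R0 (fun k => sum_f_R0 (fun i => (a / 4) ^ i) (S k)) M.
Proof.
  rewrite wgt_S.
  rewrite (sum_eq _ (fun k => Sg a (S (M - k)))) by (intros; f_equal; lia).
  apply (sum_rev (fun k => Sg a (S k))).
Qed.


Theorem lemma11p1 (a : R) (N : nat) (p : R -> nat -> R) :
  0 <= a -> (2 <= N)%nat ->
  is_transition_from_N a N p ->
  exists tau : nat -> R,
    (forall j, (1 <= j <= N)%nat ->
       (forall T, 0 <= T -> inhabited (Riemann_integrable (fun t => p t j) 0 T)) /\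
       (forall eps, eps > 0 -> exists M, forall T (pr : Riemann_integrable (fun t => p t j) 0 T),
          M <= T -> Rabs (RiemannInt pr - tau j) < eps)) /\
    sum_f_R0 (fun k => INR (S k) * tau (S k)) (N - 1)
      <= sum_f_R0 (fun k => sum_f_R0 (fun i => (a / 4) ^ i) (S k)) (N - 1).
Proof.
  intros Ha HN Hp.
  pose proof (positivity a N p Ha HN Hp) as Hpos.
  destruct Hp as [H0 HD].
  destruct N as [|M]; [lia|].
  set (N := S M) in *.
  assert (Hc : forall j t, (j <= N)%nat -> continuity_pt (fun s => p s j) t).
  { intros j t Hj. apply derivable_continuous_pt. exists (fwd_rhs a N (p t) j). apply HD; auto. }
  assert (Hcc : forall j t, (j <= N)%nat -> continuous (fun s => p s j) t).
  { intros j t Hj. apply continuity_pt_filterlim. auto. }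
  assert (HexR : forall j x y, (j <= N)%nat -> ex_RInt (fun s => p s j) x y).
  { intros j x y Hj. apply (@ex_RInt_continuous R_CompleteNormedModule). intros; auto. }
  set (I := fun j T => RInt (fun s => p s j) 0 T).
  assert (HIder : forall j t, (j <= N)%nat -> derivable_pt_lim (I j) t (p t j)).
  { intros j t Hj. apply is_derive_Reals. unfold I.
    apply (is_derive_RInt (fun s => p s j) (fun T => RInt (fun s => p s j) 0 T) 0 t).
    - apply filter_forall. intros; apply (@RInt_correct R_CompleteNormedModule); auto.
    - auto. }
  assert (HI0 : forall j, I j 0 = 0).
  { intros j. unfold I. rewrite RInt_point. reflexivity. }
  assert (HInn : forall j T, (j <= N)%nat -> 0 <= T -> 0 <= I j T).
  { intros j T Hj HT. unfold I. apply RInt_ge_0; auto. intros x Hx. apply Hpos; auto; lra. }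
  assert (HImono : forall j T1 T2, (j <= N)%nat -> 0 <= T1 -> T1 <= T2 -> I j T1 <= I j T2).
  { intros j T1 T2 Hj H1 H2. unfold I.
    rewrite <- (RInt_Chasles (fun s => p s j) 0 T1 T2) by auto.
    assert (0 <= RInt (fun s => p s j) T1 T2).
    { apply RInt_ge_0; auto. intros x Hx. apply Hpos; auto; lra. }
    change plus with Rplus. lra. }
  set (W := wgt a N N).
  assert (Key : forall T, 0 <= T -> sum_f_R0 (fun k => INR (S k) * I (S k) T) M <= W).
  { set (w := wgt a N).
    set (K := fun t => sum_f_R0 (fun j => w j * p t j) N + sum_f_R0 (fun k => INR (S k) * I (S k) t) M).
    set (K' := fun t => sum_f_R0 (fun j => w j * fwd_rhs a N (p t) j) N
                        + sum_f_R0 (fun k => INR (S k) * p t (S k)) M).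
    assert (HK : forall t, derivable_pt_lim K t (K' t)).
    { intros t. unfold K, K'.
      apply (derivable_pt_lim_plus (fun t => sum_f_R0 (fun j => w j * p t j) N)
               (fun t => sum_f_R0 (fun k => INR (S k) * I (S k) t) M)).
      - apply (sum_deriv (fun j t => w j * p t j)). intros k Hk.
        apply is_derive_Reals. apply (is_derive_scal (fun s => p s k)).
        apply is_derive_Reals. apply HD; auto.
      - apply (sum_deriv (fun k t => INR (S k) * I (S k) t)). intros k Hk.
        apply is_derive_Reals. apply (is_derive_scal (I (S k))).
        apply is_derive_Reals. apply HIder. unfold N; lia. }
    assert (HK'0 : forall t, 0 <= t -> K' t <= 0).
    { intros t Ht. unfold K'. unfold N. rewrite sbp_full.
      assert (E : sum_f_R0 (fun k => INR (S k) * p t (S k)) M =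
                  sum_f_R0 (fun j => INR j * p t j) (S M)).
      { rewrite (decomp_sum (fun j => INR j * p t j) (S M)) by lia. cbn [pred]. change (INR 0) with 0. ring. }
      rewrite E, <- plus_sum.
      apply Rle_trans with (sum_f_R0 (fun _ => 0) (S M)).
      - apply sum_Rle. intros j Hj.
        pose proof (Lw_bound a (S M) j Ha HN Hj).
        pose proof (Hpos t j Ht Hj). unfold w, N in *. nra.
      - rewrite sum_cte. lra. }
    assert (HK0 : K 0 = W).
    { unfold K. rewrite (sum_eq _ (fun _ => 0) M).
      2:{ intros i Hi. rewrite HI0. ring. }
      rewrite sum_cte. unfold N. cbn [sum_f_R0].
      rewrite (sum_eq _ (fun _ => 0) M).
      2:{ intros i Hi. rewrite H0 by (unfold N; lia).
          destruct (Nat.eqb_spec i N) as [Ei|Ei]; [unfold N in Ei; lia | ring]. }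
      rewrite sum_cte, H0 by (unfold N; lia). rewrite Nat.eqb_refl. unfold W, w, N. ring. }
    intros T HT.
    assert (HKT : K T <= W).
    { destruct (Rle_lt_or_eq_dec 0 T HT) as [HT'|HT'].
      - destruct (MVT_cor2 K K' 0 T HT' (fun c _ => HK c)) as [c [Ec Hcin]].
        pose proof (HK'0 c ltac:(lra)). nra.
      - subst T. lra. }
    assert (0 <= sum_f_R0 (fun j => w j * p T j) N).
    { apply sum_nonneg. intros k Hk. apply Rmult_le_pos.
      apply wgt_nonneg; auto. apply Hpos; auto. }
    unfold K in HKT. lra. }
  assert (HW : 0 <= W) by (apply wgt_nonneg; auto).
  assert (HIb : forall j T, (1 <= j <= N)%nat -> 0 <= T -> I j T <= W).
  { intros j T Hj HT. destruct j as [|k]; [lia|].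
    pose proof (Key T HT) as HkT.
    assert (E : INR (S k) * I (S k) T <= sum_f_R0 (fun k => INR (S k) * I (S k) T) M).
    { apply (term_le_sum (fun k => INR (S k) * I (S k) T)).
      - intros i Hi. apply Rmult_le_pos. apply pos_INR. apply HInn; auto. unfold N; lia.
      - unfold N in Hj; lia. }
    assert (1 <= INR (S k)) by (apply (le_INR 1); lia).
    assert (0 <= I (S k) T) by (apply HInn; auto; lia).
    nra. }
  set (tau := fun j => real (Lim_seq (fun n => I j (INR n)))).
  assert (Hlim : forall j, (1 <= j <= N)%nat -> is_lim_seq (fun n => I j (INR n)) (tau j)).
  { intros j Hj.
    assert (Hex : ex_finite_lim_seq (fun n => I j (INR n))).
    { apply ex_finite_lim_seq_incr with W.
      - intros n. apply HImono. lia. apply pos_INR. apply le_INR; lia.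
      - intros n. apply HIb; auto. apply pos_INR. }
    destruct Hex as [l Hl]. unfold tau. rewrite (is_lim_seq_unique _ _ Hl). exact Hl. }
  assert (Hub : forall j T, (1 <= j <= N)%nat -> 0 <= T -> I j T <= tau j).
  { intros j T Hj HT.
    assert (Rbar_le (Finite (I j T)) (Finite (tau j))).
    { apply (is_lim_seq_le_loc (fun _ => I j T) (fun n => I j (INR n))).
      - destruct (nat_above T) as [n0 Hn0]. exists n0. intros n Hn.
        apply HImono; auto. lia. apply Rle_trans with (INR n0); auto. apply le_INR; auto.
      - apply is_lim_seq_const.
      - apply Hlim; auto. }
    simpl in H. exact H. }
  exists tau. split.
  - intros j Hj. split.
    + intros T HT. constructor. apply continuity_implies_RiemannInt; auto. intros; apply Hc; lia.
    + intros eps Heps.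
      pose proof (proj2 (is_lim_seq_spec _ _) (Hlim j Hj)) as Hs. simpl in Hs.
      destruct (Hs (mkposreal eps Heps)) as [n0 Hn0].
      exists (INR n0). intros T pr HT.
      rewrite <- (RInt_Reals _ _ _ pr).
      assert (HT0 : 0 <= T) by (pose proof (pos_INR n0); lra).
      pose proof (Hub j T Hj HT0).
      assert (I j (INR n0) <= I j T) by (apply HImono; auto; [lia | apply pos_INR]).
      pose proof (Hn0 n0 (le_n _)) as Hq. simpl in Hq.
      apply Rabs_def2 in Hq. destruct Hq.
      apply Rabs_def1; unfold I in *; lra.
  - unfold N. replace (S M - 1)%nat with M by lia. rewrite <- wgt_N. fold N W.
    assert (Hsl : forall m, (m <= M)%nat ->
      is_lim_seq (fun n => sum_f_R0 (fun k => INR (S k) * I (S k) (INR n)) m)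
                 (sum_f_R0 (fun k => INR (S k) * tau (S k)) m)).
    { induction m as [|m IH]; intros Hm.
      - cbn [sum_f_R0]. apply (is_lim_seq_scal_l _ (INR 1) (tau 1%nat)). apply Hlim. unfold N; lia.
      - cbn [sum_f_R0]. apply is_lim_seq_plus'.
        + apply IH; lia.
        + apply (is_lim_seq_scal_l _ (INR (S (S m))) (tau (S (S m)))). apply Hlim. unfold N; lia. }
    assert (Rbar_le (Finite (sum_f_R0 (fun k => INR (S k) * tau (S k)) M)) (Finite W)).
    { apply (is_lim_seq_le (fun n => sum_f_R0 (fun k => INR (S k) * I (S k) (INR n)) M) (fun _ => W)).
      - intros n. apply Key. apply pos_INR.
      - apply Hsl; auto.
      - apply is_lim_seq_const. }
    exact H.
Qed.
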